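(* Let $A,A^*\in\mathrm{End}(\mathcal V)$ satisfy the Askey–Wilson relations $$[A,[A,A^*]_q]_{q^{-1}}=\rho A^*+\omega A+\eta\,\mathbb I,\qquad [A^*,[A^*,A]_q]_{q^{-1}}=\rho A+\omega A^*+\eta^*\,\mathbb I$$ with structure constants $$\rho=-\frac{(q^2-q^{-2})^2}{r_0^2},\quad \omega=\omega^{\{\cdot,*,\diamond\}},\quad \eta=\frac{q+q^{-1}}{r_0}\,\omega^{\{\cdot,\diamond,*\}},\quad \eta^*=\frac{q+q^{-1}}{r_0}\,\omega^{\{*,\diamond,\cdot\}}.$$ Let $A^\diamond$ be defined as below. Then for every ordered pair $(a,b)$ of distinct labels in $\{\cdot,*,\diamond\}$, with $c$ the remaining label, $$[A^a,[A^a,A^b]_q]_{q^{-1}}=-\frac{(q^2-q^{-2})^2}{r_0^2}A^b+\omega^{\{a,b,c\}}A^a+\frac{q+q^{-1}}{r_0}\,\omega^{\{a,c,b\}}\,\mathbb I .$$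
   Context: $q\in\mathbb C^*$ is not a root of unity, $s\in\{0,\tfrac12,1,\tfrac32,\dots\}$, and $\mathcal V$ is a complex vector space of dimension $2s+1$ with identity $\mathbb I$. Notation: $[X,Y]_q=qXY-q^{-1}YX$. Labels $a$ range over $\{\cdot,*,\diamond\}$; we write $A^{\cdot}=A$, $\mathsf b^{\cdot}=\mathsf b$, $\mathsf c^{\cdot}=\mathsf c$. Fix nonzero complex numbers $r_0$, $\mathsf b^a,\mathsf c^a$ ($a\in\{\cdot,*,\diamond\}$) with $r_0^{-2}=\mathsf b\mathsf c=\mathsf b^*\mathsf c^*=\mathsf b^\diamond\mathsf c^\diamond$. Put $\theta^a_M=\mathsf b^aq^{2M}+\mathsf c^aq^{-2M}$ (so $\theta^a_s=\mathsf b^aq^{2s}+\mathsf c^aq^{-2s}$), and for pairwise distinct labels $a,b,c$, $\omega^{\{a,b,c\}}=-(q-q^{-1})^2\big(\theta^a_s\theta^b_s-r_0^{-1}(q^{2s+1}+q^{-2s-1})\theta^c_s\big)$. Define $A^\diamond=\frac{r_0}{q^2-q^{-2}}[A^*,A]_q+\frac{r_0\,\omega^{\{\cdot,*,\diamond\}}}{(q-q^{-1})(q^2-q^{-2})}\mathbb I$. *)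

(* Defs.v *)
From HB Require Import structures.
From mathcomp Require Import all_boot all_order all_algebra.
From mathcomp Require Import complex.
Set Implicit Arguments. Unset Strict Implicit. Unset Printing Implicit Defensive.
Import Order.TTheory GRing.Theory Num.Theory.
Local Open Scope ring_scope.

Inductive label := Ldot | Lstar | Ldiam.

Section AW.
Variable C : fieldType.

Definition qcomm {n} (q : C) (X Y : 'M[C]_n) : 'M[C]_n :=
  q *: (X * Y) - q^-1 *: (Y * X).

(* theta^a_s with 2s = n2 :  b^a q^{2s} + c^a q^{-2s} *)
Definition theta_s (b c : label -> C) (q : C) (n2 : nat) (a : label) : C :=
  b a * q ^+ n2 + c a * q ^- n2.

Definition omega (b c : label -> C) (q r0 : C) (n2 : nat) (x y z : label) : C :=
  - (q - q^-1) ^+ 2 *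
    (theta_s b c q n2 x * theta_s b c q n2 y
     - r0^-1 * (q ^+ n2.+1 + q ^- n2.+1) * theta_s b c q n2 z).

Definition Adiam {n} (b c : label -> C) (q r0 : C) (n2 : nat) (A As : 'M[C]_n) : 'M[C]_n :=
  (r0 / (q ^+ 2 - q ^- 2)) *: qcomm q As A
  + (r0 * omega b c q r0 n2 Ldot Lstar Ldiam
       / ((q - q^-1) * (q ^+ 2 - q ^- 2)))%:M.

Definition Alab {n} (b c : label -> C) (q r0 : C) (n2 : nat) (A As : 'M[C]_n)
  (a : label) : 'M[C]_n :=
  match a with
  | Ldot => A
  | Lstar => As
  | Ldiam => Adiam b c q r0 n2 A As
  end.
End AW.

(* Main.v *)
Require Import Defs.
From HB Require Import structures.
From mathcomp Require Import all_boot all_order all_algebra.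
From mathcomp Require Import complex.
From mathcomp Require Import ring.
Import Order.TTheory GRing.Theory Num.Theory.
Local Open Scope ring_scope.

Section Gen.
Context {F : fieldType} {V : algType F}.
Fact qc_key : unit. Proof. by []. Qed.
Definition qc (q : F) (a b : V) : V := locked_with qc_key (q *: (a*b) - q^-1 *: (b*a)).
Lemma qcE q a b : qc q a b = q *: (a*b) - q^-1 *: (b*a).
Proof. by rewrite /qc; case: qc_key. Qed.
Definition F3 (u1 u2 u3 : V) (k1 k2 k3 : F) : V := k1*:u1 + k2*:u2 + k3*:u3.
Lemma F3D u1 u2 u3 a b c d e f :
  F3 u1 u2 u3 a b c + F3 u1 u2 u3 d e f = F3 u1 u2 u3 (a+d) (b+e) (c+f).
Proof. rewrite /F3 !scalerDl. by rewrite addrACA; congr (_ + _); rewrite addrACA. Qed.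
Lemma F3N u1 u2 u3 a b c : - F3 u1 u2 u3 a b c = F3 u1 u2 u3 (-a) (-b) (-c).
Proof. by rewrite /F3 !scaleNr !opprD. Qed.
Lemma F31 u1 u2 u3 k : k *: u1 = F3 u1 u2 u3 k 0 0.
Proof. by rewrite /F3 !scale0r !addr0. Qed.
Lemma F32 u1 u2 u3 k : k *: u2 = F3 u1 u2 u3 0 k 0.
Proof. by rewrite /F3 !scale0r add0r addr0. Qed.
Lemma F33 u1 u2 u3 k : k *: u3 = F3 u1 u2 u3 0 0 k.
Proof. by rewrite /F3 !scale0r !add0r. Qed.

Lemma key q (a b : V) : q != 0 -> qc q^-1 a (qc q a b) = - qc q a (qc q b a).
Proof.
move=> q0; rewrite !qcE !invrK !mulrBr !mulrBl -!scalerAr -!scalerAl !scalerBr !scalerA !mulrA.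
rewrite !(F31 (a*a*b) (a*b*a) (b*a*a)) !(F32 (a*a*b) (a*b*a) (b*a*a)) !(F33 (a*a*b) (a*b*a) (b*a*a)).
rewrite !(F3N, F3D); congr F3; field; done.
Qed.

Lemma key2 q (a b : V) : q != 0 -> qc q^-1 b (qc q b a) = - qc q (qc q b a) b.
Proof.
move=> q0; rewrite !qcE !invrK !mulrBr !mulrBl -!scalerAr -!scalerAl !scalerBr !scalerA !mulrA.
rewrite !(F31 (b*b*a) (b*a*b) (a*b*b)) !(F32 (b*b*a) (b*a*b) (a*b*b)) !(F33 (b*b*a) (b*a*b) (a*b*b)).
rewrite !(F3N, F3D); congr F3; field; done.
Qed.

Lemma linR q (a c : V) k l : qc q a (k*:c + l*:1) = k *: qc q a c + (l*(q - q^-1)) *: a.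
Proof.
rewrite !qcE !mulrDr !mulrDl -!scalerAr -!scalerAl mulr1 mul1r !scalerDr ?scalerBr ?scalerN !scalerA.
rewrite !(F31 (a*c) (c*a) a) !(F32 (a*c) (c*a) a) !(F33 (a*c) (c*a) a).
rewrite !(F3N, F3D); congr F3; ring.
Qed.

Lemma linL q (c b : V) k l : qc q (k*:c + l*:1) b = k *: qc q c b + (l*(q - q^-1)) *: b.
Proof.
rewrite !qcE !mulrDr !mulrDl -!scalerAr -!scalerAl mulr1 mul1r !scalerDr ?scalerBr ?scalerN !scalerA.
rewrite !(F31 (c*b) (b*c) b) !(F32 (c*b) (b*c) b) !(F33 (c*b) (b*c) b).
rewrite !(F3N, F3D); congr F3; ring.
Qed.
End Gen.

Ltac fin u1 u2 u3 := rewrite ?scalerDr ?scalerN ?scalerA ?(F31 u1 u2 u3) ?(F32 u1 u2 u3) ?(F33 u1 u2 u3) ?(F3N, F3D); congr F3.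

Lemma core {F : fieldType} {V : algType F} (q r0 w1 w2 w3 : F) (X Y Z : V) :
 q != 0 -> r0 != 0 -> q * q - 1 != 0 -> (q * q)^+2 - 1 != 0 ->
 Z = (r0 / (q^+2 - q^-2)) *: qc q Y X + (r0 * w1 / ((q - q^-1)*(q^+2 - q^-2))) *: 1 ->
 qc q^-1 X (qc q X Y) = (- (q ^+ 2 - q ^- 2) ^+ 2 / r0 ^+ 2) *: Y + w1 *: X + ((q+q^-1)/r0 * w2) *: 1 ->
 qc q^-1 Y (qc q Y X) = (- (q ^+ 2 - q ^- 2) ^+ 2 / r0 ^+ 2) *: X + w1 *: Y + ((q+q^-1)/r0 * w3) *: 1 ->
 [/\ qc q^-1 X (qc q X Z) = (- (q ^+ 2 - q ^- 2) ^+ 2 / r0 ^+ 2) *: Z + w2 *: X + ((q+q^-1)/r0*w1) *: 1,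
     qc q^-1 Z (qc q Z X) = (- (q ^+ 2 - q ^- 2) ^+ 2 / r0 ^+ 2) *: X + w2 *: Z + ((q+q^-1)/r0*w3) *: 1,
     qc q^-1 Z (qc q Z Y) = (- (q ^+ 2 - q ^- 2) ^+ 2 / r0 ^+ 2) *: Y + w3 *: Z + ((q+q^-1)/r0*w2) *: 1 &
     qc q^-1 Y (qc q Y Z) = (- (q ^+ 2 - q ^- 2) ^+ 2 / r0 ^+ 2) *: Z + w3 *: Y + ((q+q^-1)/r0*w1) *: 1].
Proof.
move=> q0 r00 d1 d2 hZ H1 H2.
have W1 : qc q Y X = ((q^+2 - q^-2)/r0) *: Z
   + (- ((q^+2-q^-2)/r0) * (r0*w1/((q-q^-1)*(q^+2-q^-2)))) *: 1.
  by rewrite hZ -[X in X = _]scale1r; fin (qc q Y X) (1 : V) X; field; rewrite ?q0 ?r00 ?d1 ?d2 //.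
have E2 : qc q X Z = ((q^+2 - q^-2)/r0) *: Y
   + (- (r0/(q^+2-q^-2)) * ((q+q^-1)/r0 * w2)) *: 1.
  rewrite hZ linR.
  have -> : qc q X (qc q Y X) = - qc q^-1 X (qc q X Y) by rewrite key // opprK.
  rewrite H1 !opprD; fin Y X (1:V); field; rewrite ?q0 ?r00 ?d1 ?d2 //.
have E3 : qc q Z Y = ((q^+2 - q^-2)/r0) *: X
   + (- (r0/(q^+2-q^-2)) * ((q+q^-1)/r0 * w3)) *: 1.
  rewrite hZ linL.
  have -> : qc q (qc q Y X) Y = - qc q^-1 Y (qc q Y X) by rewrite key2 // opprK.
  rewrite H2 !opprD; fin X Y (1:V); field; rewrite ?q0 ?r00 ?d1 ?d2 //.
split.
- rewrite key2 // E2 linL W1 !opprD; fin Z X (1:V); field; rewrite ?q0 ?r00 ?d1 ?d2 //.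
- rewrite key // E2 linR E3 !opprD; fin X Z (1:V); field; rewrite ?q0 ?r00 ?d1 ?d2 //.
- rewrite key2 // E3 linL E2 !opprD; fin Y Z (1:V); field; rewrite ?q0 ?r00 ?d1 ?d2 //.
- rewrite key // E3 linR W1 !opprD; fin Z Y (1:V); field; rewrite ?q0 ?r00 ?d1 ?d2 //.
Qed.

Local Open Scope complex_scope.

Theorem mainTheorem1 (R : rcfType) (n2 : nat) (q r0 : R[i]) (b c : label -> R[i])
  (A As : 'M[R[i]]_(n2.+1)) :
  q != 0 ->
  (forall k : nat, (0 < k)%N -> q ^+ k != 1) ->
  r0 != 0 ->
  (forall a, b a != 0) -> (forall a, c a != 0) ->
  (forall a, r0 ^- 2 = b a * c a) ->
  qcomm q^-1 A (qcomm q A As) =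
    (- (q ^+ 2 - q ^- 2) ^+ 2 / r0 ^+ 2) *: As
    + omega b c q r0 n2 Ldot Lstar Ldiam *: A
    + ((q + q^-1) / r0 * omega b c q r0 n2 Ldot Ldiam Lstar)%:M ->
  qcomm q^-1 As (qcomm q As A) =
    (- (q ^+ 2 - q ^- 2) ^+ 2 / r0 ^+ 2) *: A
    + omega b c q r0 n2 Ldot Lstar Ldiam *: As
    + ((q + q^-1) / r0 * omega b c q r0 n2 Lstar Ldiam Ldot)%:M ->
  forall x y z : label, x <> y -> y <> z -> x <> z ->
    let Aa := Alab b c q r0 n2 A As in
    qcomm q^-1 (Aa x) (qcomm q (Aa x) (Aa y)) =
      (- (q ^+ 2 - q ^- 2) ^+ 2 / r0 ^+ 2) *: Aa y
      + omega b c q r0 n2 x y z *: Aa x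
      + ((q + q^-1) / r0 * omega b c q r0 n2 x z y)%:M.
Proof.
move=> q0 hq r00 _ _ _ H1 H2 x y z xy yz xz Aa.
have e2 : q*q - 1 != 0 by rewrite subr_eq0 -expr2 hq.
have e4 : (q*q)^+2 - 1 != 0 by rewrite subr_eq0 -expr2 -exprM hq.
have oC : forall u v w, omega b c q r0 n2 u v w = omega b c q r0 n2 v u w.
  by move=> u v w; rewrite /omega (mulrC (theta_s b c q n2 u)).
have cq : forall (p : R[i]) (X Y : 'M[R[i]]_(n2.+1)), qcomm p X Y = qc p X Y.
  by move=> p X Y; rewrite qcE.
have hZ : Adiam b c q r0 n2 A As =
  (r0 / (q^+2 - q^-2)) *: qc q As A
  + (r0 * omega b c q r0 n2 Ldot Lstar Ldiam / ((q - q^-1)*(q^+2 - q^-2))) *: 1.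
  by rewrite /Adiam cq scalemx1.
rewrite !cq -[((q + q^-1) / r0 * _)%:M]scalemx1 in H1.
rewrite !cq -[((q + q^-1) / r0 * _)%:M]scalemx1 in H2.
have [c1 c2 c3 c4] := @core R[i] 'M[R[i]]_(n2.+1) q r0 _ _ _ A As _ q0 r00 e2 e4 hZ H1 H2.
rewrite /Aa !cq -[((q + q^-1) / r0 * _)%:M]scalemx1.
case: x xy xz; case: y yz; case: z => h1 h2 h3;
  try (exfalso; first [exact: (h1 erefl) | exact: (h2 erefl) | exact: (h3 erefl)]).
- exact: H1.
- exact: c1.
- by rewrite (oC Lstar Ldot); exact: H2.
- by rewrite (oC Lstar Ldot Ldiam); exact: c4.
- by rewrite (oC Ldiam Ldot Lstar) (oC Ldiam Lstar Ldot); exact: c2.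
- by rewrite (oC Ldiam Ldot Lstar) (oC Ldiam Lstar Ldot); exact: c3.
Qed.
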